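(* Let $\varepsilon<\frac12$. There is no mechanism $M$ such that, for every collection of alternatives $A$, (i) the set of Nash equilibrium outcomes (pure or mixed) of $\Gamma_M(A)$ consists of exactly one point, and (ii) there exists a Nash equilibrium of $\Gamma_M(A)$ whose outcome is $\varepsilon$-Pareto efficient.
   Context: Two players bargain over a collection (multiset) $A=(a^k)_{k\in[n]}$ of alternatives $a^k\in[0,1]^2$, $a^k_i$ being player $i$'s utility. A mechanism $M=(M_n)_n$ specifies for each $n$ signal sets $\Sigma_1(n),\Sigma_2(n)$ and a map $f_n:\Sigma_1(n)\times\Sigma_2(n)\to\Delta([n])$. With risk-neutral players it induces a game $\Gamma_M(A)$ in which players choose (possibly mixed) signals and payoffs are expected utilities; the outcome of a profile is its expected utility vector. An outcome $x$ is $\varepsilon$-Pareto efficient if there is no $a\in A$ with $a_1>x_1+\varepsilon$ and $a_2>x_2+\varepsilon$. *)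

(* Defs.v *)
From Stdlib Require Import Reals List.
Open Scope R_scope.

Fixpoint sumR (n : nat) (g : nat -> R) : R :=
  match n with O => 0 | S m => sumR m g + g m end.

Definition is_dist (n : nat) (p : nat -> R) : Prop :=
  (forall k, (k < n)%nat -> 0 <= p k) /\ sumR n p = 1.

(* A collection A = (a^k)_{k<n} is given as a function nat -> R*R
   (only indices k < n matter); a^k = (fst (A k), snd (A k)). *)

(* A mechanism: for each n, signal sets Sig1 n, Sig2 n (arbitrary types)
   and f_n : Sig1 n * Sig2 n -> Delta([n]) (required for n >= 1;
   collections are nonempty). *)
Record mechanism := Mechanism {
  Sig1 : nat -> Type;
  Sig2 : nat -> Type;
  mech_f : forall n, Sig1 n -> Sig2 n -> nat -> R;
  mech_f_dist : forall n (s1 : Sig1 n) (s2 : Sig2 n),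
      (0 < n)%nat -> is_dist n (mech_f n s1 s2)
}.

(* Mixed strategies: finitely supported distributions, given as lists of
   (weight, signal) pairs. *)
Definition listsum {T : Type} (g : T -> R) (l : list T) : R :=
  fold_right (fun x acc => g x + acc) 0 l.

Definition is_mixed {S : Type} (m : list (R * S)) : Prop :=
  Forall (fun p => 0 <= fst p) m /\ listsum fst m = 1.

Definition pure_outcome (M : mechanism) (n : nat) (A : nat -> R * R)
  (s1 : Sig1 M n) (s2 : Sig2 M n) : R * R :=
  (sumR n (fun k => mech_f M n s1 s2 k * fst (A k)),
   sumR n (fun k => mech_f M n s1 s2 k * snd (A k))).

Definition outcome (M : mechanism) (n : nat) (A : nat -> R * R)
  (m1 : list (R * Sig1 M n)) (m2 : list (R * Sig2 M n)) : R * R :=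
  (listsum (fun p1 => listsum (fun p2 =>
      fst p1 * fst p2 * fst (pure_outcome M n A (snd p1) (snd p2))) m2) m1,
   listsum (fun p1 => listsum (fun p2 =>
      fst p1 * fst p2 * snd (pure_outcome M n A (snd p1) (snd p2))) m2) m1).

Definition nash (M : mechanism) (n : nat) (A : nat -> R * R)
  (m1 : list (R * Sig1 M n)) (m2 : list (R * Sig2 M n)) : Prop :=
  is_mixed m1 /\ is_mixed m2 /\
  (forall d1 : list (R * Sig1 M n), is_mixed d1 ->
     fst (outcome M n A d1 m2) <= fst (outcome M n A m1 m2)) /\
  (forall d2 : list (R * Sig2 M n), is_mixed d2 ->
     snd (outcome M n A m1 d2) <= snd (outcome M n A m1 m2)).

Definition eps_pareto (eps : R) (n : nat) (A : nat -> R * R) (x : R * R) : Prop :=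
  ~ (exists k, (k < n)%nat /\ fst (A k) > fst x + eps /\ snd (A k) > snd x + eps).

Definition valid_collection (n : nat) (A : nat -> R * R) : Prop :=
  (0 < n)%nat /\
  forall k, (k < n)%nat -> 0 <= fst (A k) <= 1 /\ 0 <= snd (A k) <= 1.

(* Main.v *)
Require Import Defs.
From Stdlib Require Import Reals List Lra.
Open Scope R_scope.

Lemma sumR_ext n g h : (forall k, (k < n)%nat -> g k = h k) -> sumR n g = sumR n h.
Proof.
  induction n; simpl; intros H; [reflexivity|].
  rewrite IHn by (intros; apply H; auto). rewrite H; auto.
Qed.

Lemma sumR_plus n g h : sumR n (fun k => g k + h k) = sumR n g + sumR n h.
Proof. induction n; simpl; [lra|]. rewrite IHn; lra. Qed.

Lemma listsum_ext {T} (g h : T -> R) l : (forall x, g x = h x) -> listsum g l = listsum h l.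
Proof. intros H; induction l; simpl; [reflexivity|]. rewrite IHl, H; reflexivity. Qed.

Lemma listsum_plus {T} (g h : T -> R) l : listsum (fun x => g x + h x) l = listsum g l + listsum h l.
Proof. induction l; simpl; [lra|]. rewrite IHl; lra. Qed.

Lemma listsum_scal {T} c (g : T -> R) l : listsum (fun x => c * g x) l = c * listsum g l.
Proof. induction l; simpl; [lra|]. rewrite IHl; lra. Qed.

Lemma listsum_scal_r_aux {T} (l : list (R * T)) : listsum (fun p1 => fst p1 * 1) l = listsum fst l.
Proof. apply listsum_ext; intros; ring. Qed.

Lemma listsum_zero {T} (l : list T) : listsum (fun _ => 0) l = 0.
Proof. induction l; simpl; [lra|]. rewrite IHl; lra. Qed.

Lemma snd_zero M n A m1 m2 : (forall k, snd (A k) = 0) -> snd (outcome M n A m1 m2) = 0.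
Proof.
  intros H. unfold outcome, pure_outcome; cbn [fst snd].
  rewrite (listsum_ext _ (fun _ => 0)); [apply listsum_zero|].
  intros p1. rewrite (listsum_ext _ (fun _ => 0)); [apply listsum_zero|].
  intros p2. rewrite (sumR_ext _ _ (fun _ => 0)).
  - assert (Z : forall m, sumR m (fun _ => 0) = 0) by (induction m; simpl; lra). rewrite Z; ring.
  - intros k _. rewrite H; ring.
Qed.

Lemma fst_zero M n A m1 m2 : (forall k, fst (A k) = 0) -> fst (outcome M n A m1 m2) = 0.
Proof.
  intros H. unfold outcome, pure_outcome; cbn [fst snd].
  rewrite (listsum_ext _ (fun _ => 0)); [apply listsum_zero|].
  intros p1. rewrite (listsum_ext _ (fun _ => 0)); [apply listsum_zero|].
  intros p2. rewrite (sumR_ext _ _ (fun _ => 0)).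
  - assert (Z : forall m, sumR m (fun _ => 0) = 0) by (induction m; simpl; lra). rewrite Z; ring.
  - intros k _. rewrite H; ring.
Qed.

Lemma diag M n A m1 m2 : (forall k, fst (A k) = snd (A k)) ->
  fst (outcome M n A m1 m2) = snd (outcome M n A m1 m2).
Proof.
  intros H. unfold outcome, pure_outcome; cbn [fst snd].
  apply listsum_ext; intros p1. apply listsum_ext; intros p2.
  f_equal. apply sumR_ext. intros k _. rewrite H; reflexivity.
Qed.

Lemma sum_one M n A m1 m2 : (0 < n)%nat -> (forall k, (k < n)%nat -> fst (A k) + snd (A k) = 1) ->
  is_mixed m1 -> is_mixed m2 ->
  fst (outcome M n A m1 m2) + snd (outcome M n A m1 m2) = 1.
Proof.
  intros Hn H [_ H1] [_ H2]. unfold outcome; cbn [fst snd].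
  rewrite <- listsum_plus.
  rewrite (listsum_ext _ (fun p1 => fst p1 * 1)).
  { rewrite listsum_scal_r_aux. exact H1. }
  intros p1. rewrite <- listsum_plus.
  transitivity (listsum (fun p2 => fst p1 * fst p2) m2); [| rewrite listsum_scal, H2; ring].
  apply listsum_ext; intros p2.
  assert (E : fst (pure_outcome M n A (snd p1) (snd p2)) + snd (pure_outcome M n A (snd p1) (snd p2)) = 1).
  { unfold pure_outcome; simpl. rewrite <- sumR_plus.
    destruct (mech_f_dist M n (snd p1) (snd p2) Hn) as [_ Hs]. rewrite <- Hs.
    apply sumR_ext; intros k Hk. rewrite <- Rmult_plus_distr_l, H by exact Hk; ring. }
  transitivity (fst p1 * fst p2 * (fst (pure_outcome M n A (snd p1) (snd p2)) + snd (pure_outcome M n A (snd p1) (snd p2)))); [ring|].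
  rewrite E; ring.
Qed.

Definition g (k : nat) : R := match k with 0%nat => 1 | _ => 0 end.
Definition h (k : nat) : R := match k with 1%nat => 1 | _ => 0 end.

Lemma valid_gh (a b : nat -> R) : (forall k, 0 <= a k <= 1) -> (forall k, 0 <= b k <= 1) ->
  valid_collection 2 (fun k => (a k, b k)).
Proof. intros Ha Hb. split; [auto|]. intros k _; simpl; auto. Qed.

Lemma g01 k : 0 <= g k <= 1. Proof. destruct k as [|[|k]]; simpl; lra. Qed.
Lemma h01 k : 0 <= h k <= 1. Proof. destruct k as [|[|k]]; simpl; lra. Qed.
Lemma z01 (k : nat) : 0 <= 0 <= 1. Proof. lra. Qed.

Theorem theorem2 : forall eps : R, eps < 1 / 2 ->
  ~ (exists M : mechanism,
       forall (n : nat) (A : nat -> R * R), valid_collection n A ->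
         (exists x : R * R,
            (exists m1 m2, nash M n A m1 m2 /\ outcome M n A m1 m2 = x) /\
            (forall m1 m2, nash M n A m1 m2 -> outcome M n A m1 m2 = x)) /\
         (exists m1 m2, nash M n A m1 m2 /\
            eps_pareto eps n A (outcome M n A m1 m2))).
Proof.
  intros eps Heps [M HM].
  set (A0 := fun k => (g k, h k)).
  set (A1 := fun k => (g k, 0)).
  set (A2 := fun k => (g k, g k)).
  set (A3 := fun k => (0, h k)).
  set (A4 := fun k => (h k, h k)).
  destruct (HM 2%nat A1 (valid_gh _ _ g01 z01)) as [[x1 [_ U1]] _].
  destruct (HM 2%nat A3 (valid_gh _ _ z01 h01)) as [[x3 [_ U3]] _].
  destruct (HM 2%nat A2 (valid_gh _ _ g01 g01)) as [_ [a1 [a2 [[Ha1 [Ha2 [Ha3 Ha4]]] P2]]]].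
  destruct (HM 2%nat A4 (valid_gh _ _ h01 h01)) as [_ [b1 [b2 [[Hb1 [Hb2 [Hb3 Hb4]]] P4]]]].
  destruct (HM 2%nat A0 (valid_gh _ _ g01 h01)) as [[x0 [[c1 [c2 [[Hc1 [Hc2 [Hc3 Hc4]]] _]]] _]] _].
  assert (N1 : nash M 2 A1 a1 a2).
  { split; [auto|split; [auto|split]].
    - intros d1 Hd1. exact (Ha3 d1 Hd1).
    - intros d2 _. rewrite !snd_zero by (intros; reflexivity). lra. }
  assert (Q1 : fst (outcome M 2 A2 a1 a2) = fst x1).
  { rewrite <- (U1 _ _ N1). reflexivity. }
  assert (D2 := diag M 2 A2 a1 a2 (fun k => eq_refl)).
  assert (G1 : fst x1 >= 1 - eps).
  { destruct (Rlt_or_le (fst x1) (1 - eps)) as [Hl|Hl]; [|lra].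
    exfalso. apply P2. exists 0%nat. split; [auto|].
    change (g 0 > fst (outcome M 2 A2 a1 a2) + eps /\ g 0 > snd (outcome M 2 A2 a1 a2) + eps). simpl g. lra. }
  assert (N3 : nash M 2 A3 b1 b2).
  { split; [auto|split; [auto|split]].
    - intros d1 _. rewrite !fst_zero by (intros; reflexivity). lra.
    - intros d2 Hd2. exact (Hb4 d2 Hd2). }
  assert (Q3 : snd (outcome M 2 A4 b1 b2) = snd x3).
  { rewrite <- (U3 _ _ N3). reflexivity. }
  assert (D4 := diag M 2 A4 b1 b2 (fun k => eq_refl)).
  assert (G3 : snd x3 >= 1 - eps).
  { destruct (Rlt_or_le (snd x3) (1 - eps)) as [Hl|Hl]; [|lra].
    exfalso. apply P4. exists 1%nat. split; [auto|].
    change (h 1 > fst (outcome M 2 A4 b1 b2) + eps /\ h 1 > snd (outcome M 2 A4 b1 b2) + eps). simpl h. lra. }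
  assert (N1' : nash M 2 A1 c1 c2).
  { split; [auto|split; [auto|split]].
    - intros d1 Hd1. exact (Hc3 d1 Hd1).
    - intros d2 _. rewrite !snd_zero by (intros; reflexivity). lra. }
  assert (N3' : nash M 2 A3 c1 c2).
  { split; [auto|split; [auto|split]].
    - intros d1 _. rewrite !fst_zero by (intros; reflexivity). lra.
    - intros d2 Hd2. exact (Hc4 d2 Hd2). }
  assert (E1 : fst (outcome M 2 A0 c1 c2) = fst x1).
  { rewrite <- (U1 _ _ N1'). reflexivity. }
  assert (E3 : snd (outcome M 2 A0 c1 c2) = snd x3).
  { rewrite <- (U3 _ _ N3'). reflexivity. }
  assert (S := sum_one M 2 A0 c1 c2 (le_S _ _ (le_n 1)) ltac:(intros [|[|k]] Hk; [simpl; lra|simpl; lra|exfalso; apply Nat.ltb_lt in Hk; discriminate]) Hc1 Hc2).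
  lra.
Qed.
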